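(* A matrix $Y\in\mathcal{H}^{n\times r}$ is a right canonical matrix for $T$ at $\lambda_0$ if and only if (i) $Y(\lambda_0)\in\mathbb{C}^{n\times r}$ has full column rank, and (ii) $TY\Delta^{-1}\doteq 0$, i.e. $TY\Delta^{-1}$ is holomorphic in a neighborhood of $\lambda_0$.
   Context: Let $\Omega\subset\mathbb{C}$ be open and $\lambda_0\in\Omega$ fixed. $\mathcal{H}$ denotes the ring of holomorphic functions on $\Omega$, and $\mathcal{H}_0$ the ring of functions holomorphic in some neighborhood of $\lambda_0$. Write $\chi_0(\lambda)=\lambda-\lambda_0$. For meromorphic matrices $M_1,M_2$ of equal size, $M_1\doteq M_2$ means that $M_2-M_1$ is holomorphic in a neighborhood of $\lambda_0$. Throughout, $T\in\mathcal{H}^{n\times n}$ with $\det T$ not identically zero and $\det T(\lambda_0)=0$, and $r=\dim\ker T(\lambda_0)$. There exist $U_L,U_R\in\mathcal{H}_0^{n\times n}$ with $U_L(\lambda_0),U_R(\lambda_0)$ nonsingular and uniquely determined integers $m_1\ge\cdots\ge m_n\ge 0$ (the partial multiplicities) with $U_LTU_R=\mathrm{diag}(\chi_0^{m_1},\dots,\chi_0^{m_n})$; $m_i>0$ exactly for $i\le r$. Set $\Delta=\mathrm{diag}(\chi_0^{m_1},\dots,\chi_0^{m_r})$. A root function for $T$ at $\lambda_0$ is $y\in\mathcal{H}^n$ with $y(\lambda_0)\neq0$ and $T(\lambda_0)y(\lambda_0)=0$; its multiplicity $\nu(y)$ is the order of the zero of $Ty$ at $\lambda_0$. A right canonical matrix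 for $T$ at $\lambda_0$ is $Y\in\mathcal{H}^{n\times r}$ whose columns $y_1,\dots,y_r$ are root functions such that (a) $y_1(\lambda_0),\dots,y_r(\lambda_0)$ are linearly independent, (b) $\sum_{i=1}^r\nu(y_i)=\sum_{i=1}^r m_i$, (c) $\nu(y_1)\ge\cdots\ge\nu(y_r)$. *)

(* Defs.v *)
From mathcomp Require Import all_boot all_order all_algebra.
From mathcomp Require Import complex.
From mathcomp Require Import all_classical all_reals all_analysis.
Import numFieldNormedType.Exports.
Import Order.TTheory GRing.Theory Num.Theory.

Set Implicit Arguments.
Unset Strict Implicit.
Unset Printing Implicit Defensive.

Local Open Scope classical_set_scope.
Local Open Scope ring_scope.

Definition Cx (R : realType) : numClosedFieldType := R[i].

Section Defs.
Variable R : realType.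
Local Notation C := (Cx R).

(* complex differentiability: derivable along 1 with complex scalars *)
Definition holo_on (O : set C) (f : C -> C) : Prop :=
  forall z, O z -> derivable f z 1.

Definition holo_near (z0 : C) (f : C -> C) : Prop :=
  \forall z \near z0, derivable f z 1.

Definition mx_holo_on (p q : nat) (O : set C) (M : C -> 'M[C]_(p, q)) : Prop :=
  forall i j, holo_on O (fun z => M z i j).

Definition mx_holo_near (p q : nat) (z0 : C) (M : C -> 'M[C]_(p, q)) : Prop :=
  forall i j, holo_near z0 (fun z => M z i j).

(* F (a function defined at least on a punctured neighborhood of z0, e.g. a
   meromorphic matrix) is holomorphic in a neighborhood of z0: it coincides on
   a punctured neighborhood of z0 with a function holomorphic near z0. *)
Definition mx_holo_germ (p q : nat) (z0 : C) (F : C -> 'M[C]_(p, q)) : Prop :=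
  exists G : C -> 'M[C]_(p, q),
    mx_holo_near z0 G /\ \forall z \near z0^', F z = G z.

Definition mx_doteq (p q : nat) (z0 : C) (M1 M2 : C -> 'M[C]_(p, q)) : Prop :=
  mx_holo_germ z0 (fun z => M2 z - M1 z).

(* diag(chi0^{m_0}, ..., chi0^{m_{k-1}}) and its inverse (0-based indices) *)
Definition diag_pow (k : nat) (z0 : C) (m : nat -> nat) (z : C) : 'M[C]_k :=
  \matrix_(i, j) (if i == j then (z - z0) ^+ m i else 0).

Definition diag_pow_inv (k : nat) (z0 : C) (m : nat -> nat) (z : C) : 'M[C]_k :=
  \matrix_(i, j) (if i == j then ((z - z0) ^+ m i)^-1 else 0).

Definition partial_multiplicities (n : nat) (T : C -> 'M[C]_n) (z0 : C)
    (m : nat -> nat) : Prop :=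
  (forall i j, (i <= j < n)%N -> (m j <= m i)%N) /\
  exists UL UR : C -> 'M[C]_n,
    [/\ mx_holo_near z0 UL, mx_holo_near z0 UR,
        UL z0 \in unitmx, UR z0 \in unitmx &
        \forall z \near z0, UL z *m T z *m UR z = diag_pow n z0 m z].

Definition root_function (n : nat) (O : set C) (T : C -> 'M[C]_n) (z0 : C)
    (y : C -> 'cV[C]_n) : Prop :=
  [/\ mx_holo_on O y, y z0 != 0 & T z0 *m y z0 = 0].

Definition zero_order (n : nat) (z0 : C) (F : C -> 'cV[C]_n) (k : nat) : Prop :=
  exists g : C -> 'cV[C]_n,
    [/\ mx_holo_near z0 g, g z0 != 0 &
        \forall z \near z0, F z = (z - z0) ^+ k *: g z].

Definition root_mult (n : nat) (T : C -> 'M[C]_n) (z0 : C)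
    (y : C -> 'cV[C]_n) (k : nat) : Prop :=
  zero_order z0 (fun z => T z *m y z) k.

(* right canonical matrix (columns y_1..y_r are col 0 .. col (r-1)) *)
Definition right_canonical (n r : nat) (O : set C) (T : C -> 'M[C]_n) (z0 : C)
    (m : nat -> nat) (Y : C -> 'M[C]_(n, r)) : Prop :=
  [/\ mx_holo_on O Y,
      (forall j : 'I_r, root_function O T z0 (fun z => col j (Y z))),
      (forall c : 'cV[C]_r, Y z0 *m c = 0 -> c = 0) &
      exists nu : 'I_r -> nat,
        [/\ forall j : 'I_r, root_mult T z0 (fun z => col j (Y z)) (nu j),
            (\sum_(j < r) nu j = \sum_(i < r) m i)%N &
            forall i j : 'I_r, (i <= j)%N -> (nu j <= nu i)%N]].

End Defs.

(* Main.v *)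
Require Import Defs.
From mathcomp Require Import all_boot all_order all_algebra.
From mathcomp Require Import complex.
From mathcomp Require Import all_classical all_reals all_analysis.
Import numFieldNormedType.Exports.
Local Open Scope classical_set_scope.
Local Open Scope ring_scope.
Import Order.TTheory GRing.Theory Num.Theory.

Set Implicit Arguments. Unset Strict Implicit. Unset Printing Implicit Defensive.
Section An.
Variable R : realType.
Local Notation C := (Cx R).
Variable z0 : C.
Record ct (f : C -> C) : Prop := CT { ct_cvg : f x @[x --> z0] --> f z0 }.
Lemma ct_cst a : ct (fun _ => a).
Proof. constructor. apply: cvg_cst. exact: (nbhs_filter z0). Qed.
Arguments ct_cst : clear implicits.
Lemma ct_id : ct (fun z => z).
Proof. constructor; exact: cvg_id. Qed.
Lemma ct_add f g : ct f -> ct g -> ct (fun z => f z + g z).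
Proof. move=> [hf] [hg]; constructor. apply: (cvgD hf hg). Qed.
Lemma ct_mul f g : ct f -> ct g -> ct (fun z => f z * g z).
Proof. move=> [hf] [hg]; constructor. apply: (cvgM hf hg). Qed.
Lemma ct_opp f : ct f -> ct (fun z => - f z).
Proof. move=> [hf]; constructor; apply: (cvgN hf). Qed.
Lemma ct_ext f g : (forall z, f z = g z) -> ct f -> ct g.
Proof. by move=> e; have -> : f = g by apply/funext. Qed.

Lemma ct_exp f k : ct f -> ct (fun z => f z ^+ k).
Proof.
move=> hf; elim: k => [|k IH]; first exact: ct_cst.
by apply: ct_ext (ct_mul hf IH) => z; rewrite exprS.
Qed.

Lemma ct_chi k : ct (fun z => (z - z0) ^+ k).
Proof. by apply: ct_exp; apply: ct_ext (ct_add ct_id (ct_opp (ct_cst z0))). Qed.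

Lemma ct_sum (I : Type) (s : seq I) (P : pred I) (F : I -> C -> C) :
  (forall i, ct (F i)) -> ct (fun z => \sum_(i <- s | P i) F i z).
Proof.
move=> hF; elim: s => [|x s IH].
  by apply: ct_ext (ct_cst 0) => z; rewrite big_nil.
case Px: (P x).
  by apply: ct_ext (ct_add (hF x) IH) => z; rewrite big_cons Px.
by apply: ct_ext IH => z; rewrite big_cons Px.
Qed.

Lemma ct_prod (I : Type) (s : seq I) (P : pred I) (F : I -> C -> C) :
  (forall i, ct (F i)) -> ct (fun z => \prod_(i <- s | P i) F i z).
Proof.
move=> hF; elim: s => [|x s IH].
  by apply: ct_ext (ct_cst 1) => z; rewrite big_nil.
case Px: (P x).
  by apply: ct_ext (ct_mul (hF x) IH) => z; rewrite big_cons Px.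
by apply: ct_ext IH => z; rewrite big_cons Px.
Qed.

Definition mct p q (M : C -> 'M[C]_(p, q)) := forall i j, ct (fun z => M z i j).

Lemma mct_mul p q s (A : C -> 'M[C]_(p, q)) (B : C -> 'M[C]_(q, s)) :
  mct A -> mct B -> mct (fun z => A z *m B z).
Proof.
move=> hA hB i j; apply: ct_ext (fun z => esym (mxE _ _ _ _)) _.
by apply: ct_sum => k; apply: ct_mul.
Qed.

Lemma ct_det p (A : C -> 'M[C]_p) : mct A -> ct (fun z => \det (A z)).
Proof.
move=> hA; apply: ct_sum => s; apply: ct_mul; first exact: ct_cst.
by apply: ct_prod => i; apply: hA.
Qed.

Lemma mct_adj p (A : C -> 'M[C]_p) : mct A -> mct (fun z => \adj (A z)).
Proof.
move=> hA i j; apply: ct_ext (fun z => esym (mxE _ _ _ _)) _.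
apply: ct_mul; first exact: ct_cst.
apply: ct_det => a b; apply: ct_ext (fun z => esym (mxE _ _ _ _)) _.
by apply: ct_ext (fun z => esym (mxE _ _ _ _)) _; apply: hA.
Qed.

Lemma holo_ct f : derivable f z0 1 -> ct f.
Proof. by move/derivable1_diffP/differentiable_continuous => h; constructor. Qed.

End An.

Unset Implicit Arguments.
Section An.
Variable R : realType.
Local Notation C := (Cx R).
Variable z0 : C.
Local Notation ct := (ct z0).
Lemma near_eq_at f g : ct f -> ct g -> (\forall z \near z0^', f z = g z) -> f z0 = g z0.
Proof.
move=> [hf] [hg] hfg.
have hf' : f x @[x --> z0^'] --> f z0.
  by apply: cvg_within_filter hf.
have hg' : g x @[x --> z0^'] --> g z0.
  by apply: cvg_within_filter hg.
have hg'' : f x @[x --> z0^'] --> g z0.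
  apply: cvg_trans hg'; apply: near_eq_cvg.
  apply: filterS hfg; by move=> z ->.
exact: (cvg_unique (@norm_hausdorff _ C) hf' hg'').
Qed.

Lemma scalar_key f g (a b : nat) : ct f -> ct g ->
  (\forall z \near z0^', (z - z0) ^+ a * f z = (z - z0) ^+ b * g z) ->
  ((a < b)%N \/ (a = b /\ g z0 = 0)) -> f z0 = 0.
Proof.
move=> hf hg he hab.
have hphi : ct (fun z => (z - z0) ^+ (b - a) * g z).
  by apply: ct_mul => //; exact: ct_chi.
have hab' : (a <= b)%N by case: hab => [/ltnW|[->]].
suff Heq : f z0 = (z0 - z0) ^+ (b - a) * g z0.
  rewrite Heq subrr; case: hab => [hab|[-> ->]]; last by rewrite mulr0.
  by rewrite expr0n subn_eq0 leqNgt hab mul0r.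
apply: (near_eq_at _ _ hf hphi).
apply: filterS2 he (nbhs_dnbhs_neq z0) => z hz neq.
have hz' : (z - z0) ^+ a != 0 by rewrite expf_neq0 // subr_eq0.
by apply: (mulfI hz'); rewrite hz mulrA -exprD subnKC.
Qed.
End An.

Section Key.
Variable R : realType.
Local Notation C := (Cx R).

Lemma diag_mulE (n p : nat) (z0 z : C) (m : nat -> nat) (M : 'M[C]_(n, p)) i j :
  (diag_pow n z0 m z *m M) i j = (z - z0) ^+ m i * M i j.
Proof.
rewrite !mxE (bigD1 i) //= big1 ?addr0; first by rewrite mxE eqxx.
by move=> k hk; rewrite mxE eq_sym (negbTE hk) mul0r.
Qed.

Lemma mul_diag_invE (n p : nat) (z0 z : C) (m : nat -> nat) (M : 'M[C]_(n, p)) i j :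
  (M *m diag_pow_inv p z0 m z) i j = M i j * ((z - z0) ^+ m j)^-1.
Proof.
rewrite !mxE (bigD1 j) //= big1 ?addr0; first by rewrite mxE eqxx.
by move=> k hk; rewrite mxE (negbTE hk) mulr0.
Qed.

Lemma col_mulE (n q p : nat) (M : 'M[C]_(n, q)) (N : 'M[C]_(q, p)) l i :
  (M *m col l N) i 0 = (M *m N) i l.
Proof. by rewrite !mxE; apply: eq_bigr => k _; rewrite mxE. Qed.

Lemma KL (n r : nat) (l0 : C) (T UL UR : C -> 'M[C]_n) (Y : C -> 'M[C]_(n,r))
    (m : nat -> nat) :
  mct l0 UL -> mct l0 UR -> mct l0 Y ->
  (\forall z \near l0, UL z *m T z *m UR z = diag_pow n l0 m z) ->
  forall (l : 'I_r) (k : nat) (h : C -> 'cV[C]_n), mct l0 h ->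
  (\forall z \near l0^', T z *m col l (Y z) = (z - l0) ^+ k *: h z) ->
  forall i : 'I_n, ((m i < k)%N \/ (m i = k /\ h l0 = 0)) ->
  (\adj (UR l0) *m Y l0) i l = 0.
Proof.
move=> cUL cUR cY hD l k h ch hTy i hik.
pose f := fun z => (\adj (UR z) *m Y z) i l.
pose g := fun z => \det (UR z) * (UL z *m h z) i 0.
have cf : ct l0 f by apply: (mct_mul (mct_adj cUR) cY).
have cg : ct l0 g by apply: ct_mul; [apply: ct_det | apply: (mct_mul cUL ch)].
change (f l0 = 0); apply: (scalar_key _ l0 f g (m i) k cf cg).
  apply: filterS2 (nbhs_dnbhs hD) hTy => z Dz Tz.
  rewrite /f /g -diag_mulE -Dz.
  rewrite mulmxA -(mulmxA (UL z *m T z)) mul_mx_adj mul_mx_scalar -scalemxAl [LHS]mxE.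
  rewrite -(col_mulE _ _ _ (UL z *m T z)) -mulmxA Tz -scalemxAr [X in _ * X = _]mxE.
  by rewrite mulrCA.
case: hik => [->|[-> h0]]; first by left.
by right; split => //; rewrite /g h0 mulmx0 mxE mulr0.
Qed.
End Key.
Set Implicit Arguments.
Section LA.
Variable F : fieldType.

Lemma rank_zero_rows n p (V : 'M[F]_(n,p)) (A : pred 'I_n) :
  (forall i j, ~~ A i -> V i j = 0) -> (\rank V <= #|A|)%N.
Proof.
move=> HV.
pose g : 'I_#|A| -> 'I_n := enum_val.
pose Pg : 'M[F]_(n, #|A|) := \matrix_(i, k) (i == g k)%:R.
pose X : 'M[F]_(#|A|, p) := \matrix_(k, j) V (g k) j.
have -> : V = Pg *m X.
  apply/matrixP => i j; rewrite !mxE.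
  case Ai: (i \in A).
    rewrite (bigD1 (enum_rank_in Ai i)) //= big1 ?addr0.
      by rewrite !mxE /g enum_rankK_in // eqxx mul1r.
    move=> k Hk; rewrite !mxE.
    case: eqP => [Ei|]; last by rewrite mul0r.
    have := enum_valK_in Ai k; rewrite -/(g k) -Ei => E.
    by rewrite E eqxx in Hk.
  rewrite (HV i j); last by apply/negbT.
  symmetry; apply: big1 => k _; rewrite !mxE.
  case: eqP => [Ei|]; last by rewrite mul0r.
  by move: (enum_valP k); rewrite -/(g k) -Ei Ai.
apply: leq_trans (mxrankM_maxr _ _) _.
exact: rank_leq_row.
Qed.

Lemma inj_row_free n r (W : 'M[F]_(n, r)) :
  (forall c : 'cV[F]_r, W *m c = 0 -> c = 0) -> row_free W^T.
Proof.
move=> Winj; rewrite -kermx_eq0; apply/eqP/row_matrixP => i.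
rewrite row0; apply: trmx_inj; rewrite trmx0; apply: Winj.
rewrite -[W in W *m _]trmxK -trmx_mul.
have ->: (row i (kermx W^T) *m W^T = 0).
  by rewrite -row_mul mulmx_ker row0.
by rewrite trmx0.
Qed.

Lemma rank_inj n r (W : 'M[F]_(n, r)) :
  (forall c : 'cV[F]_r, W *m c = 0 -> c = 0) -> \rank W = r.
Proof. by move/inj_row_free; rewrite /row_free mxrank_tr => /eqP. Qed.

Lemma inj_rank n r (W : 'M[F]_(n, r)) :
  \rank W = r -> forall c : 'cV[F]_r, W *m c = 0 -> c = 0.
Proof.
move=> Hr c Hc.
have: (c^T <= kermx W^T)%MS by apply/sub_kermxP; rewrite -trmx_mul Hc trmx0.
have /eqP -> : kermx W^T == 0.
  by rewrite kermx_eq0 /row_free mxrank_tr Hr.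
by rewrite submx0 => /eqP/(congr1 trmx); rewrite trmxK trmx0.
Qed.

Lemma count_cols n r (W : 'M[F]_(n, r)) (S : pred 'I_r) (A : pred 'I_n) :
  (forall c : 'cV[F]_r, W *m c = 0 -> c = 0) ->
  (forall i l, S l -> ~~ A i -> W i l = 0) -> (#|S| <= #|A|)%N.
Proof.
move=> Winj HW.
pose f : 'I_#|S| -> 'I_r := enum_val.
pose Qf : 'M[F]_(r, #|S|) := \matrix_(l, k) (l == f k)%:R.
pose V := W *m Qf.
have HV : forall i k, V i k = W i (f k).
  move=> i k; rewrite !mxE (bigD1 (f k)) //= big1 ?addr0.
    by rewrite !mxE eqxx mulr1.
  by move=> l Hl; rewrite !mxE (negbTE Hl) mulr0.
apply: leq_trans (rank_zero_rows (V := V) (A := A) _).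
  have /row_freeP [B HB] := inj_row_free Winj.
  have : Qf^T *m B^T *m V = 1%:M.
    rewrite /V mulmxA -(mulmxA Qf^T) -[W in B^T *m W]trmxK -trmx_mul HB trmx1 mulmx1.
    apply/matrixP => k k'; rewrite !mxE.
    rewrite (bigD1 (f k)) //= big1 ?addr0.
      rewrite !mxE eqxx mul1r.
      by rewrite (inj_eq enum_val_inj) eq_sym.
    by move=> l Hl; rewrite !mxE (negbTE Hl) mul0r.
  move=> H1; rewrite -{1}(mxrank1 F #|S|) -H1.
  exact: mxrankM_maxr.
by move=> i k Ai; rewrite HV HW //; exact: (enum_valP k).
Qed.

End LA.

Lemma card_le (n r : nat) (P Q : pred nat) :
  (forall k, (k < n)%N -> P k -> (k < r)%N /\ Q k) ->
  (#|[pred i : 'I_n | P i]| <= #|[pred i : 'I_r | Q i]|)%N.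
Proof.
move=> H.
rewrite !cardE -(size_map val (enum [pred i : 'I_n | P i])).
rewrite -(size_map val (enum [pred i : 'I_r | Q i])).
apply: uniq_leq_size.
  by rewrite (map_inj_uniq val_inj) enum_uniq.
move=> k Hk; case/seq.mapP: Hk => i; rewrite mem_enum inE => Pi ->.
have [kr Qk] := H i (ltn_ord i) Pi.
apply/seq.mapP; exists (Ordinal kr) => //.
by rewrite mem_enum inE.
Qed.

Lemma card_ord_pred (n : nat) : #|[pred i : 'I_n | true]| = n.
Proof. by rewrite -[RHS](card_ord n); apply: eq_card => i; rewrite !inE. Qed.

Lemma sum_le_eq r (nu m : 'I_r -> nat) :
  (forall j, nu j <= m j)%N -> (\sum_(j < r) nu j = \sum_(j < r) m j)%N ->
  forall j, nu j = m j.
Proof.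
move=> Hle Hs j; apply/eqP; rewrite eqn_leq Hle /=.
rewrite leqNgt; apply/negP => Hlt.
move: Hs; rewrite (bigD1 j) //= [in RHS](bigD1 j) //= => Hs.
have : (nu j + \sum_(i < r | i != j) nu i < m j + \sum_(i < r | i != j) m i)%N.
  apply: (@leq_trans (m j + \sum_(i < r | i != j) nu i)); first by rewrite ltn_add2r.
  by rewrite leq_add2l; apply: leq_sum => i _; exact: Hle.
by rewrite Hs ltnn.
Qed.

Unset Implicit Arguments.

Theorem mainTheorem9 (R : realType) (Om : set (Cx R)) (l0 : Cx R) (n r : nat)
    (T : Cx R -> 'M[Cx R]_n) (m : nat -> nat) :
  open Om -> Om l0 -> mx_holo_on Om T ->
  (exists z, Om z /\ \det (T z) != 0) ->
  \det (T l0) = 0 ->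
  \rank (kermx (T l0)^T) = r ->
  partial_multiplicities T l0 m ->
  forall Y : Cx R -> 'M[Cx R]_(n, r), mx_holo_on Om Y ->
    (right_canonical Om T l0 m Y <->
       (\rank (Y l0) = r /\
        mx_doteq l0 (fun z => T z *m Y z *m diag_pow_inv r l0 m z) (fun _ => 0))).
Proof.
move=> hOm hl0 hT _ _ hr [hmono [UL [UR [hUL hUR uUL uUR hD]]]] Y hY.
have cT : mct l0 T := fun i j => holo_ct (hT i j l0 hl0).
have cY : mct l0 Y := fun i j => holo_ct (hY i j l0 hl0).
have cUL : mct l0 UL := fun i j => holo_ct (nbhs_singleton (hUL i j)).
have cUR : mct l0 UR := fun i j => holo_ct (nbhs_singleton (hUR i j)).
have rn : (r <= n)%N by rewrite -hr rank_leq_row.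
pose W := \adj (UR l0) *m Y l0.
have detUR : \det (UR l0) != 0 by rewrite -unitfE -unitmxE.
have Winj : (forall c : 'cV[Cx R]_r, Y l0 *m c = 0 -> c = 0) -> forall c : 'cV[Cx R]_r, W *m c = 0 -> c = 0.
  move=> hinj c Wc; apply: hinj.
  have : UR l0 *m (W *m c) = 0 by rewrite Wc mulmx0.
  rewrite /W !mulmxA mul_mx_adj mul_scalar_mx -scalemxAl => /eqP.
  by rewrite scalemx_eq0 (negbTE detUR) /= => /eqP.
have hD' := nbhs_dnbhs hD.
split.
- move=> [hYO hroot hinj [nu [hnu hsum hnumono]]].
  have [G hG] := choice hnu.
  have cG : forall j, mct l0 (G j).
    by move=> j i k; case: (hG j) => hh _ _; apply: holo_ct (nbhs_singleton (hh i k)).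
  have hWinj := Winj hinj.
  have nu_le : forall j : 'I_r, (nu j <= m j)%N.
    move=> j; rewrite leqNgt; apply/negP => hlt.
    pose S := [pred l : 'I_r | (l <= j)%N].
    pose A := [pred i : 'I_n | (m j < m i)%N].
    have hc := count_cols (S := S) (A := A) hWinj.
    have : (#|S| <= #|A|)%N.
      apply: hc => i l; rewrite !inE -leqNgt => hl hi.
      case: (hG l) => _ _ hTl.
      apply: (KL R n r l0 T UL UR Y m cUL cUR cY hD l (nu l) (G l) (cG l) (nbhs_dnbhs hTl)).
      left; exact: leq_ltn_trans hi (leq_trans hlt (hnumono _ _ hl)).
    have h1 : (j.+1 <= #|S|)%N.
      rewrite -{1}(card_ord_pred j.+1).
      apply: (@card_le _ _ predT (fun k => (k <= j)%N)) => k hk _; split => //.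
      exact: leq_trans hk (ltn_ord j).
    have h2 : (#|A| <= j)%N.
      rewrite -[X in (_ <= X)%N](card_ord_pred j).
      apply: (@card_le _ _ (fun k => (m j < m k)%N) predT) => k hk hmk; split => //.
      rewrite ltnNge; apply/negP => hjk.
      have := hmono j k; rewrite hjk hk => /(_ isT) hmk'.
      by move: hmk; rewrite ltnNge hmk'.
    move=> h3; have := leq_trans h1 (leq_trans h3 h2); by rewrite ltnn.
  have nu_eq := sum_le_eq nu_le hsum.
  split; first exact: rank_inj hinj.
  exists (fun z => - \matrix_(i, j) G j z i 0); split.
    move=> i k; case: (hG k) => hh _ _.
    apply: filterS (hh i 0) => z dz.
    have -> : (fun z => (- \matrix_(i, j) G j z i 0) i k) = (fun z => - G k z i 0).
      by apply/funext => w; rewrite !mxE.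
    exact: derivableN dz.
  have hall : \forall z \near l0^', forall j, T z *m col j (Y z) = (z - l0) ^+ nu j *: G j z.
    apply: filter_forall => j; case: (hG j) => _ _ h; exact: nbhs_dnbhs h.
  apply: filterS2 hall (nbhs_dnbhs_neq l0) => z hz neq.
  apply/matrixP => i j. rewrite mxE [X in _ + X]mxE mul_diag_invE.
  rewrite -col_mulE hz [X in X / _]mxE nu_eq !mxE sub0r.
  congr (- _); rewrite mulrAC mulfV ?mul1r //.
  by rewrite expf_neq0 // subr_eq0.
- move=> [hrank [G' [hG'h hG'eq]]].
  have Yinj : forall c : 'cV[Cx R]_r, Y l0 *m c = 0 -> c = 0.
    by move=> c; apply: (@inj_rank _ _ _ (Y l0) hrank c).
  have hWinj := Winj Yinj.
  have mpos : forall l : 'I_r, (0 < m l)%N.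
    move=> l; rewrite lt0n; apply/negP => /eqP ml0.
    pose K := kermx (T l0)^T.
    pose V := invmx (UR l0) *m K^T.
    have hV : \rank V = r.
      rewrite -mxrank_tr /V trmx_mul trmxK mxrankMfree ?hr //.
      by rewrite row_free_unit unitmx_tr unitmx_inv.
    have hVz : forall (i : 'I_n) (j : 'I_n), ~~ (0 < m i)%N -> V i j = 0.
      move=> i j; rewrite lt0n negbK => /eqP mi0.
      have D0 := nbhs_singleton hD.
      have : (diag_pow n l0 m l0 *m V) i j = 0.
        rewrite -D0 /V !mulmxA -(mulmxA (UL l0 *m T l0)) mulmxV // mulmx1 -mulmxA.
        have -> : T l0 *m K^T = 0 by rewrite -[T l0]trmxK -trmx_mul mulmx_ker trmx0.
        by rewrite mulmx0 mxE.
      by rewrite diag_mulE mi0 expr0 mul1r.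
    have := rank_zero_rows hVz; rewrite hV => hle.
    have : (#|[pred i : 'I_n | (0 < m i)%N]| <= #|[pred i : 'I_l | true]|)%N.
      apply: (@card_le _ _ (fun k => (0 < m k)%N) predT) => k hk hmk; split => //.
      rewrite ltnNge; apply/negP => hlk.
      have := hmono l k; rewrite hlk hk => /(_ isT).
      by rewrite ml0 leqn0 => /eqP hk0; rewrite hk0 in hmk.
    rewrite card_ord_pred => h2.
    by have := leq_trans hle h2; rewrite leqNgt ltn_ord.
  pose g (l : 'I_r) z := - col l (G' z).
  have cg : forall l, mct l0 (g l).
    move=> l i k; apply: (ct_ext _ (ct_opp (holo_ct (nbhs_singleton (hG'h i l))))).
    by move=> z; rewrite !mxE.
  have heq' : forall l : 'I_r, \forall z \near l0^', T z *m col l (Y z) = (z - l0) ^+ m l *: g l z.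
    move=> l; apply: filterS2 hG'eq (nbhs_dnbhs_neq l0) => z hz neq.
    have hchi : (z - l0) ^+ m l != 0 by rewrite expf_neq0 // subr_eq0.
    apply/matrixP => i k; rewrite (ord1 k) col_mulE.
    have := congr1 (fun M : 'M[Cx R]_(n, r) => M i l) hz; rewrite mxE [X in _ + X]mxE mul_diag_invE mxE sub0r => e.
    have -> : ((z - l0) ^+ m l *: g l z) i 0 = (z - l0) ^+ m l * - G' z i l by rewrite !mxE.
    by rewrite -(mulfVK hchi ((T z *m Y z) i l)) -[X in X * _ = _]opprK e mulrC.
  have heqf : forall l : 'I_r, \forall z \near l0, T z *m col l (Y z) = (z - l0) ^+ m l *: g l z.
    move=> l; have h := heq' l.
    have e0 : T l0 *m col l (Y l0) = (l0 - l0) ^+ m l *: g l l0.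
      apply/matrixP => i k; rewrite (ord1 k).
      apply: (near_eq_at _ l0 (fun z => (T z *m col l (Y z)) i 0) (fun z => ((z - l0) ^+ m l *: g l z) i 0)).
      + apply: (mct_mul cT) => a b; apply: (ct_ext _ (cY a l)) => z; by rewrite mxE.
      + apply: (ct_ext _ (ct_mul (@ct_chi R l0 (m l)) (cg l i 0))) => z; by rewrite [RHS]mxE.
      + by apply: filterS h => z ->.
    have h' : \forall z \near l0, z != l0 -> T z *m col l (Y z) = (z - l0) ^+ m l *: g l z := h.
    apply: filterS h' => z hz; case: (eqVneq z l0) => [->|/hz] //.
  have gl0 : forall j : 'I_r, g j l0 != 0.
    move=> j; apply/negP => /eqP hj0.
    pose t := m j.
    pose S := [pred l : 'I_r | (t < m l)%N || (l == j)].
    pose A := [pred i : 'I_n | (t < m i)%N].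
    have hcS : (#|S| <= #|A|)%N.
      apply: (count_cols (S:=S) (A:=A) hWinj) => i l; rewrite !inE -leqNgt => /orP [hl|/eqP ->] hi.
      - apply: (KL R n r l0 T UL UR Y m cUL cUR cY hD l (m l) (g l) (cg l) (heq' l)).
        by left; exact: leq_ltn_trans hi hl.
      - apply: (KL R n r l0 T UL UR Y m cUL cUR cY hD j (m j) (g j) (cg j) (heq' j)).
        move: hi; rewrite leq_eqVlt => /orP [/eqP ->|hlt]; [by right; split|by left].
    have hA : (#|A| <= #|[pred l : 'I_r | (t < m l)%N]|)%N.
      apply: (@card_le _ _ (fun k => (t < m k)%N) (fun k => (t < m k)%N)) => k hk hmk; split => //.
      have hkj : (k < j)%N.
        rewrite ltnNge; apply/negP => hjk.
        have := hmono j k; rewrite hjk hk => /(_ isT) hmk'.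
        by move: hmk; rewrite ltnNge hmk'.
      exact: ltn_trans hkj (ltn_ord j).
    have hS : (#|[pred l : 'I_r | (t < m l)%N]| < #|S|)%N.
      apply: proper_card; apply/properP; split.
        by apply/fintype.subsetP => l; rewrite !inE => ->.
      by exists j; rewrite !inE ?eqxx ?orbT // ltnn.
    by have := leq_ltn_trans hA hS; rewrite ltnNge hcS.
  split => //.
  + move=> j; split.
    * move=> i k z hz.
      have -> : (fun z => col j (Y z) i k) = (fun z => Y z i j) by apply/funext => w; rewrite mxE.
      exact: hY i j z hz.
    * apply/eqP => hc; have := Yinj (delta_mx j 0); rewrite -colE hc => /(_ erefl).
      move/matrixP => /(_ j 0); rewrite !mxE !eqxx => /eqP; by rewrite oner_eq0.
    * by rewrite (nbhs_singleton (heqf j)) subrr expr0n (gtn_eqF (mpos j)) /= scale0r.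
  + exists (fun j => m j); split => //.
    * move=> j; exists (g j); split => //.
      move=> i k; apply: filterS (hG'h i j) => z dz.
      have -> : (fun z => g j z i k) = (fun z => - G' z i j) by apply/funext => w; rewrite !mxE.
      exact: derivableN dz.
    * move=> i j hij; apply: hmono; rewrite hij /=.
      exact: leq_trans (ltn_ord j) rn.
Qed.
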